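(* Let $(Q,P)$ be a weakly quasi-lattice ordered group and let $\Lambda$ be a $P$-graph with $\mathrm{FA}(\Lambda)\neq\emptyset$. Under the homeomorphism $z\mapsto(z,e,z)$ from $\mathcal{X}(\Lambda)$ onto the unit space of the path groupoid $\mathcal{G}(\Lambda)$, the boundary-path space $\partial\mathcal{X}(\Lambda)$ is identified with a closed invariant subset of the unit space of $\mathcal{G}(\Lambda)$.
   Context: $(Q,P)$ weakly quasi-lattice ordered: $Q$ a discrete group, $P\subseteq Q$ a subsemigroup containing the identity $e$ with $P\cap P^{-1}=\{e\}$, and, with $p\le r$ meaning $pq=r$ for some $q\in P$, any two elements of $P$ with a common upper bound have a least common upper bound. A $P$-graph is a countable small category $\Lambda$ (range/source $r,s$) with a functor $d:\Lambda\to P$ with unique factorisation (if $d(\lambda)=pq$ there are unique $\mu,\nu$ with $\lambda=\mu\nu$, $d(\mu)=p$, $d(\nu)=q$). Write $\Lambda^m=d^{-1}(m)$, $\lambda\Lambda=\{\lambda\mu: s(\lambda)=r(\mu)\}$, $\mu\preceq\lambda$ iff $\lambda\in\mu\Lambda$. $\mathrm{FA}(\Lambda)$ is the set of $\lambda$ such that for all $\mu\in\lambda\Lambda,\nu\in\Lambda$ there is finite $J\subseteq\Lambda$ with $\mu\Lambda\cap\nu\Lambda=\bigcup_{\kappa\in J}\kappa\Lambda$. A filter is a nonempty hereditary and directed subset of $\Lambda$ (w.r.t. $\preceq$); $\mathcal{F}(\Lambda)$ the filters, $\mathcal{U}(\Lambda)$ the maximal filters. $\mathcal{P}(\Lambda)$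 has the product topology from $\{0,1\}^\Lambda$; subsets have the subspace topology. Path space $\mathcal{X}(\Lambda)=\{x\in\mathcal{F}(\Lambda): x\cap\mathrm{FA}(\Lambda)\neq\emptyset\}$; boundary-path space $\partial\mathcal{X}(\Lambda)$ = closure of $\mathcal{U}(\Lambda)\cap\mathcal{X}(\Lambda)$ in $\mathcal{X}(\Lambda)$. For $x\in\mathcal{X}(\Lambda)$, $m\in P$ with $x\cap\Lambda^m\neq\emptyset$ (write $x\in\mathrm{dom}(m)$), $x(0,m)$ is the unique element of $x\cap\Lambda^m$ and $x\cdot m=\{\mu: x(0,m)\mu\in x\}$. $\mathcal{G}(\Lambda)$ is the set of $(x,q,y)\in\mathcal{X}(\Lambda)\times Q\times\mathcal{X}(\Lambda)$ with $q=mn^{-1}$, $x\in\mathrm{dom}(m)$, $y\in\mathrm{dom}(n)$, $x\cdot m=y\cdot n$ for some $m,n\in P$; product $(x,q,y)(y,r,z)=(x,qr,z)$, inverse $(y,q^{-1},x)$, so range $r(x,q,y)=(x,e,x)$ and source $s(x,q,y)=(y,e,y)$; topology with basis $\{(x,mn^{-1},y)\in\mathcal{G}(\Lambda): x\in U,y\in V,x\cdot m=y\cdot n\}$, $m,n\in P$, $U,V$ open. A subset $U$ of the unit space is invariant if $r(s^{-1}(U))\subseteq U$. *)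

(* Defs.v *)
From Stdlib Require Import List.
Set Implicit Arguments.

Record WQLOG := {
  grp :> Type;
  gmul : grp -> grp -> grp;
  gone : grp;
  ginv : grp -> grp;
  gmul_assoc : forall a b c, gmul a (gmul b c) = gmul (gmul a b) c;
  gmul_1l : forall a, gmul gone a = a;
  gmul_1r : forall a, gmul a gone = a;
  gmul_Vl : forall a, gmul (ginv a) a = gone;
  gmul_Vr : forall a, gmul a (ginv a) = gone;
  Pos : grp -> Prop;
  Pos_one : Pos gone;
  Pos_mul : forall p q, Pos p -> Pos q -> Pos (gmul p q);
  Pos_cap_inv : forall p, Pos p -> Pos (ginv p) -> p = gone;
  Pos_wqlo : forall p q, Pos p -> Pos q ->
    (exists r, Pos r /\ (exists a, Pos a /\ gmul p a = r)
                     /\ (exists b, Pos b /\ gmul q b = r)) ->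
    exists l, Pos l /\ (exists a, Pos a /\ gmul p a = l)
                    /\ (exists b, Pos b /\ gmul q b = l)
              /\ forall r, Pos r -> (exists a, Pos a /\ gmul p a = r) ->
                           (exists b, Pos b /\ gmul q b = r) ->
                           exists c, Pos c /\ gmul l c = r
}.

(** Composition [comp] is total on the
    type of morphisms but only meaningful on composable pairs
    ([src mu = rng nu]); all axioms only concern composable pairs. *)
Record PGraph (QP : WQLOG) := {
  Obj : Type;
  Mor : Type;
  rng : Mor -> Obj;
  src : Mor -> Obj;
  idm : Obj -> Mor;
  comp : Mor -> Mor -> Mor;
  rng_id : forall v, rng (idm v) = v;
  src_id : forall v, src (idm v) = v;
  rng_comp : forall mu nu, src mu = rng nu -> rng (comp mu nu) = rng mu;
  src_comp : forall mu nu, src mu = rng nu -> src (comp mu nu) = src nu;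
  comp_id_l : forall mu, comp (idm (rng mu)) mu = mu;
  comp_id_r : forall mu, comp mu (idm (src mu)) = mu;
  comp_assoc : forall a b c, src a = rng b -> src b = rng c ->
    comp a (comp b c) = comp (comp a b) c;
  Obj_countable : exists f : Obj -> nat, forall u v, f u = f v -> u = v;
  Mor_countable : exists f : Mor -> nat, forall u v, f u = f v -> u = v;
  deg : Mor -> QP;
  deg_pos : forall mu, Pos QP (deg mu);
  deg_id : forall v, deg (idm v) = gone QP;
  deg_comp : forall mu nu, src mu = rng nu ->
    deg (comp mu nu) = gmul QP (deg mu) (deg nu);
  unique_fact : forall lam p q, Pos QP p -> Pos QP q ->
    deg lam = gmul QP p q ->
    exists mu nu, (src mu = rng nu /\ lam = comp mu nu /\ deg mu = p /\ deg nu = q)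
      /\ forall mu' nu', src mu' = rng nu' -> lam = comp mu' nu' ->
           deg mu' = p -> deg nu' = q -> mu' = mu /\ nu' = nu
}.

Section PathGroupoid.
Variable QP : WQLOG.
Variable L : PGraph QP.

Definition Mset := Mor L -> Prop.

Definition prec (mu lam : Mor L) : Prop :=
  exists nu, src L mu = rng L nu /\ lam = comp L mu nu.

Definition FA (lam : Mor L) : Prop :=
  forall mu nu, prec lam mu ->
    exists J : list (Mor L), forall tau,
      (prec mu tau /\ prec nu tau) <-> (exists kap, In kap J /\ prec kap tau).

Definition is_filter (x : Mset) : Prop :=
  (exists lam, x lam)
  /\ (forall lam mu, x lam -> prec mu lam -> x mu)
  /\ (forall mu nu, x mu -> x nu -> exists lam, x lam /\ prec mu lam /\ prec nu lam).

Definition is_max_filter (x : Mset) : Prop :=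
  is_filter x /\ forall y, is_filter y -> (forall lam, x lam -> y lam) ->
                          forall lam, y lam -> x lam.

(** product topology on P(Λ) = {0,1}^Λ: basic open cylinders *)
Definition cylinder (F G : list (Mor L)) (x : Mset) : Prop :=
  (forall lam, In lam F -> x lam) /\ (forall lam, In lam G -> ~ x lam).

Definition open_P (O : Mset -> Prop) : Prop :=
  forall x, O x -> exists F G, cylinder F G x /\ forall y, cylinder F G y -> O y.

Definition pathX (x : Mset) : Prop := is_filter x /\ exists lam, x lam /\ FA lam.

Definition open_X (U : Mset -> Prop) : Prop :=
  exists O, open_P O /\ forall x, U x <-> (O x /\ pathX x).

(** boundary-path space: closure in X(Λ) of U(Λ) ∩ X(Λ) *)
Definition bdryX (x : Mset) : Prop :=
  pathX x /\
  forall O, open_P O -> O x -> exists y, O y /\ is_max_filter y /\ pathX y.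

Definition in_dom (x : Mset) (m : QP) : Prop := exists lam, x lam /\ deg L lam = m.

Definition shift (x : Mset) (m : QP) : Mset :=
  fun mu => exists lam, x lam /\ deg L lam = m /\ src L lam = rng L mu
                        /\ x (comp L lam mu).

Definition same_set (a b : Mset) : Prop := forall mu, a mu <-> b mu.

Definition Triple := (Mset * grp QP * Mset)%type.

Definition inG (g : Triple) : Prop :=
  let '(x, q, y) := g in
  pathX x /\ pathX y /\
  exists m n, Pos QP m /\ Pos QP n /\ q = gmul QP m (ginv QP n)
    /\ in_dom x m /\ in_dom y n /\ same_set (shift x m) (shift y n).

Definition g_rng (g : Triple) : Triple := let '(x, _, _) := g in (x, gone QP, x).
Definition g_src (g : Triple) : Triple := let '(_, _, y) := g in (y, gone QP, y).

Definition basicG (m n : QP) (U V : Mset -> Prop) (g : Triple) : Prop :=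
  let '(x, q, y) := g in
  inG g /\ q = gmul QP m (ginv QP n) /\ U x /\ V y
  /\ in_dom x m /\ in_dom y n /\ same_set (shift x m) (shift y n).

Definition open_G (W : Triple -> Prop) : Prop :=
  (forall g, W g -> inG g) /\
  forall g, W g -> exists m n U V, Pos QP m /\ Pos QP n /\ open_X U /\ open_X V
    /\ basicG m n U V g /\ forall h, basicG m n U V h -> W h.

Definition unitG (g : Triple) : Prop := exists x, pathX x /\ g = (x, gone QP, x).

Definition bdry_units (g : Triple) : Prop := exists z, bdryX z /\ g = (z, gone QP, z).

Definition closed_in_units (A : Triple -> Prop) : Prop :=
  exists W, open_G W /\ forall g, unitG g -> (~ A g <-> W g).

Definition invariant (A : Triple -> Prop) : Prop :=
  forall g, inG g -> A (g_src g) -> A (g_rng g).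

End PathGroupoid.

(* Main.v *)
Require Import Defs.
From Stdlib Require Import List.
From Stdlib Require Import Classical.
Import ListNotations.

Section H.
Variable QP : WQLOG.
Variable L : PGraph QP.
Local Notation M := (Mor L).
Local Notation cp := (comp L).
Local Notation pr := (prec L).
Local Notation src := (src L).
Local Notation rng := (rng L).

Lemma gcancel (a b c : grp QP) : gmul QP a b = gmul QP a c -> b = c.
Proof.
  intro H. rewrite <- (gmul_1l QP b), <- (gmul_1l QP c), <- (gmul_Vl QP a),
    <- !gmul_assoc, H. reflexivity.
Qed.

Lemma lcancel (a u v : M) : src a = rng u -> src a = rng v -> cp a u = cp a v -> u = v.
Proof.
  intros Hu Hv E.
  assert (Hd: deg L u = deg L v).
  { apply (gcancel (deg L a)). rewrite <- (deg_comp L a u Hu), <- (deg_comp L a v Hv).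
    now rewrite E. }
  destruct (unique_fact L (cp a u) (deg L a) (deg L u) (deg_pos L a) (deg_pos L u)
     (deg_comp L a u Hu)) as [mu [nu [_ Huniq]]].
  destruct (Huniq a u Hu eq_refl eq_refl eq_refl) as [_ E1].
  destruct (Huniq a v Hv E eq_refl (eq_sym Hd)) as [_ E2].
  congruence.
Qed.

Lemma prec_refl a : pr a a.
Proof. exists (idm L (src a)). split. now rewrite rng_id. now rewrite comp_id_r. Qed.

Lemma prec_ext u s : src u = rng s -> pr u (cp u s).
Proof. intro H. exists s. auto. Qed.

Lemma prec_trans a b c : pr a b -> pr b c -> pr a c.
Proof.
  intros [n1 [H1 E1]] [n2 [H2 E2]]. subst b c.
  rewrite (src_comp L _ _ H1) in H2. exists (cp n1 n2). split.
  - rewrite (rng_comp L _ _ H2); auto.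
  - rewrite (comp_assoc L _ _ _ H1 H2); auto.
Qed.

Lemma prec_comp a u v : src a = rng u -> pr u v -> pr (cp a u) (cp a v).
Proof.
  intros H [s [Hs E]]. subst v. exists s. split.
  - rewrite (src_comp L _ _ H); auto.
  - rewrite (comp_assoc L _ _ _ H Hs); auto.
Qed.

Lemma prec_cancel a u v : src a = rng u -> src a = rng v -> pr (cp a u) (cp a v) -> pr u v.
Proof.
  intros Hu Hv [s [Hs E]]. rewrite (src_comp L _ _ Hu) in Hs.
  rewrite <- (comp_assoc L _ _ _ Hu Hs) in E.
  assert (v = cp u s).
  { apply (lcancel a); auto. rewrite (rng_comp L _ _ Hs); auto. }
  exists s; auto.
Qed.

Lemma prec_id a : pr (idm L (rng a)) a.
Proof. exists a. split. rewrite src_id; auto. rewrite comp_id_l; auto. Qed.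

Definition Phi (a b : M) (w : Mset L) : Mset L :=
  fun nu => exists mu, src a = rng mu /\ w (cp a mu) /\ pr nu (cp b mu).

Lemma hered (w : Mset L) : is_filter w -> forall l m, w l -> pr m l -> w m.
Proof. intros [_ [H _]]; exact H. Qed.

Lemma Phi_filter a b w : is_filter w -> w a -> src a = src b -> is_filter (Phi a b w).
Proof.
  intros [Hne [Hher Hdir]] Ha Hab. split; [|split].
  - exists b. exists (idm L (src a)). split. rewrite rng_id; auto. split.
    rewrite comp_id_r; auto. rewrite Hab, comp_id_r. apply prec_refl.
  - intros l m [mu [H1 [H2 H3]]] Hml. exists mu. repeat split; auto.
    eapply prec_trans; eauto.
  - intros n1 n2 [m1 [A1 [B1 C1]]] [m2 [A2 [B2 C2]]].
    destruct (Hdir _ _ B1 B2) as [r [Hr [[s1 [S1 E1]] [s2 [S2 E2]]]]].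
    rewrite (src_comp L _ _ A1) in S1. rewrite (src_comp L _ _ A2) in S2.
    rewrite <- (comp_assoc L _ _ _ A1 S1) in E1. rewrite <- (comp_assoc L _ _ _ A2 S2) in E2.
    assert (Em : cp m1 s1 = cp m2 s2).
    { apply (lcancel a). rewrite (rng_comp L _ _ S1); auto.
      rewrite (rng_comp L _ _ S2); auto. congruence. }
    exists (cp b (cp m1 s1)). split; [|split].
    + exists (cp m1 s1). split. rewrite (rng_comp L _ _ S1); auto. split. congruence.
      apply prec_refl.
    + eapply prec_trans. exact C1. apply prec_comp. congruence. apply prec_ext; auto.
    + rewrite Em. eapply prec_trans. exact C2. apply prec_comp. congruence. apply prec_ext; auto.
Qed.

Lemma filter_ub (x : Mset L) : is_filter x -> forall l, (forall f, In f l -> x f) ->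
  forall a, x a -> exists t, x t /\ pr a t /\ forall f, In f l -> pr f t.
Proof.
  intros Fx. induction l as [|f l IH]; intros Hl a Ha.
  - exists a. split; auto. split. apply prec_refl. intros f [].
  - destruct (IH (fun g Hg => Hl g (or_intror Hg)) a Ha) as [t [xt [Hat Ht]]].
    destruct Fx as [_ [_ Hdir]].
    destruct (Hdir f t (Hl f (or_introl eq_refl)) xt) as [r [xr [Hfr Htr]]].
    exists r. split; auto. split. eapply prec_trans; eauto.
    intros g [<-|Hg]; auto. eapply prec_trans; eauto.
Qed.

Lemma list_choice (A B : Type) (P : A -> B -> Prop) (l : list A) :
  (forall a, In a l -> exists b, P a b) ->
  exists lb, (forall b, In b lb -> exists a, In a l /\ P a b)
          /\ (forall a, In a l -> exists b, In b lb /\ P a b).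
Proof.
  induction l as [|a l IH]; intro H.
  - exists []. split; intros _ [].
  - destruct (H a (or_introl eq_refl)) as [b Hb].
    destruct (IH (fun c Hc => H c (or_intror Hc))) as [lb [H1 H2]].
    exists (b :: lb). split.
    + intros c [Ec|Hc]; [subst c; exists a; split; [left|]; auto|].
      destruct (H1 c Hc) as [d [? ?]]; exists d; split; [right|]; auto.
    + intros c [Ec|Hc]; [subst c; exists b; split; [left|]; auto|].
      destruct (H2 c Hc) as [d [? ?]]; exists d; split; [right|]; auto.
Qed.

Lemma bdry_transfer (x y : Mset L) lam al : pathX x -> bdryX y -> src lam = src al -> x lam ->
  (forall mu, src lam = rng mu -> (x (cp lam mu) <-> y (cp al mu))) -> bdryX x.
Proof.
  intros Px By Hs Hl HR. split; auto.
  intros O HO Ox. destruct (HO x Ox) as [F [G [[HF HG] HFG]]].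
  destruct Px as [Fx [be [xbe FAbe]]].
  assert (HFl : forall f, In f (be :: F) -> x f).
  { intros f [Ef|Hf]; [subst f; auto | auto]. }
  destruct (filter_ub x Fx (be :: F) HFl lam Hl) as [ls [xls [Hlls Hub]]].
  destruct Hlls as [m0 [Hm0 Els]].
  set (as_ := cp al m0).
  assert (Hal : src al = rng m0) by congruence.
  assert (HR' : forall mu, src ls = rng mu -> (x (cp ls mu) <-> y (cp as_ mu))).
  { intros mu Hmu. rewrite Els in Hmu |- *. rewrite (src_comp L _ _ Hm0) in Hmu.
    unfold as_. rewrite <- (comp_assoc L _ _ _ Hm0 Hmu), <- (comp_assoc L _ _ _ Hal Hmu).
    apply HR. rewrite (rng_comp L _ _ Hmu); auto. }
  assert (Hsls: src ls = src as_).
  { rewrite Els; unfold as_; rewrite (src_comp L _ _ Hm0), (src_comp L _ _ Hal); auto. }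
  assert (yas : y as_). { unfold as_. apply HR; auto. rewrite <- Els; auto. }
  assert (FAls : FA L ls).
  { intros mu nu Hp. apply FAbe. eapply prec_trans; [apply Hub; left; auto | exact Hp]. }
  assert (HG' : exists G', (forall h, In h G' -> ~ y h) /\ forall g, In g G ->
     forall mu, src ls = rng mu -> pr g (cp ls mu) -> exists h, In h G' /\ pr h (cp as_ mu)).
  { destruct (list_choice _ _ (fun g (H : list M) => (forall h, In h H -> ~ y h) /\ forall mu, src ls = rng mu
        -> pr g (cp ls mu) -> exists h, In h H /\ pr h (cp as_ mu)) G) as [LL [HLL1 HLL2]].
    - intros g Hg. destruct (FAls ls g (prec_refl ls)) as [J HJ].
      destruct (list_choice _ _ (fun k (h : M) => ~ y h /\ forall mu, src ls = rng mu ->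
          pr k (cp ls mu) -> pr h (cp as_ mu)) J) as [H [HH1 HH2]].
      + intros k Hk.
        assert (Hk' : pr ls k /\ pr g k) by (apply HJ; exists k; split; auto; apply prec_refl).
        destruct Hk' as [[mk [Hmk Ek]] Hgk].
        exists (cp as_ mk). split.
        * intro Hy. apply (HG g Hg). apply (hered x Fx k); auto.
          rewrite Ek. apply HR'; auto.
        * intros mu Hmu Hp. apply prec_comp. congruence. rewrite Ek in Hp.
          eapply prec_cancel; eauto.
      + exists H. split.
        * intros h Hh. destruct (HH1 h Hh) as [k [_ [P1 _]]]. exact P1.
        * intros mu Hmu Hp. destruct (proj1 (HJ (cp ls mu))) as [k [Hk Hkp]].
          { split; auto. apply prec_ext; auto. }
          destruct (HH2 k Hk) as [h [Hh [_ Hh2]]]. exists h; split; auto.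
    - exists (concat LL). split.
      + intros h Hh. apply in_concat in Hh. destruct Hh as [H [HinL HinH]].
        destruct (HLL1 H HinL) as [g [_ [P1 _]]]. apply P1; auto.
      + intros g Hg mu Hmu Hp. destruct (HLL2 g Hg) as [H [HinL [_ P2]]].
        destruct (P2 mu Hmu Hp) as [h [Hh1 Hh2]]. exists h. split; auto.
        apply in_concat. eauto. }
  destruct HG' as [G' [HG'1 HG'2]].
  destruct (proj2 By (cylinder [as_] G')) as [y' [[Cy1 Cy2] [My' Py']]].
  - intros z Hz. exists [as_], G'. split; auto.
  - split. intros l [<-|[]]; auto. intros h Hh; apply HG'1; auto.
  - assert (y'as : y' as_) by (apply Cy1; left; auto).
    assert (Fy' : is_filter y') by (apply My').
    assert (Fx' : is_filter (Phi as_ ls y')) by (apply Phi_filter; auto).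
    assert (x'ls : Phi as_ ls y' ls).
    { exists (idm L (src as_)). split. rewrite rng_id; auto. split.
      rewrite comp_id_r; auto. rewrite <- Hsls, comp_id_r. apply prec_refl. }
    exists (Phi as_ ls y'). split; [|split].
    + apply HFG. split.
      * intros f Hf. apply (hered _ Fx' ls); auto. apply Hub; right; auto.
      * intros g Hg [mu [Hmu [Hy'mu Hp]]].
        destruct (HG'2 g Hg mu (eq_trans Hsls Hmu) Hp) as [h [Hh Hhp]].
        apply (Cy2 h Hh). eapply (hered y'); eauto.
    + split; auto. intros w Fw Hsub nu Hw.
      assert (Fw' := Fw). destruct Fw' as [wne [wher wdir]].
      destruct (wdir nu ls Hw (Hsub _ x'ls)) as [r [Hr [Hnr [mu [Hmu Er]]]]].
      assert (Fw'' : is_filter (Phi ls as_ w)) by (apply Phi_filter; auto).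
      assert (Hsub' : forall l, y' l -> Phi ls as_ w l).
      { intros l Hl0. destruct Fy' as [_ [_ ydir]].
        destruct (ydir l as_ Hl0 y'as) as [t [Ht [Hlt [s [Hs' Et]]]]].
        exists s. split. congruence. split.
        - apply Hsub. exists s. split; auto. split. rewrite <- Et; auto. apply prec_refl.
        - rewrite <- Et; auto. }
      assert (Hy'r : y' (cp as_ mu)).
      { apply (proj2 My' _ Fw'' Hsub'). exists mu. split; auto. split.
        rewrite <- Er; auto. apply prec_refl. }
      exists mu. split. congruence. split; auto. rewrite <- Er; auto.
    + split; auto. exists ls. split; auto.
Qed.

Lemma deg_unique (x : Mset L) a b : is_filter x -> x a -> x b -> deg L a = deg L b -> a = b.
Proof.
  intros [_ [_ Hdir]] xa xb Hd.
  destruct (Hdir a b xa xb) as [t [xt [[n1 [H1 E1]] [n2 [H2 E2]]]]].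
  assert (Hn : deg L n2 = deg L n1).
  { apply (gcancel (deg L a)). rewrite <- (deg_comp L a n1 H1). rewrite Hd at 1.
    rewrite <- (deg_comp L b n2 H2). congruence. }
  destruct (unique_fact L t (deg L a) (deg L n1) (deg_pos L a) (deg_pos L n1)
     (eq_trans (f_equal (deg L) E1) (deg_comp L a n1 H1))) as [mu [nu [_ Hu]]].
  destruct (Hu a n1 H1 E1 eq_refl eq_refl) as [A1 _].
  destruct (Hu b n2 H2 E2 (eq_sym Hd) Hn) as [A2 _].
  congruence.
Qed.

Lemma shift_char (x : Mset L) m lam : is_filter x -> x lam -> deg L lam = m ->
  forall mu, shift x m mu <-> (src lam = rng mu /\ x (cp lam mu)).
Proof.
  intros Fx xl dl mu. split.
  - intros [l1 [x1 [d1 [s1 c1]]]].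
    assert (l1 = lam) by (apply (deg_unique x); auto; congruence). subst; auto.
  - intros [H1 H2]. exists lam. auto.
Qed.

Lemma shift_R (x y : Mset L) m n : is_filter x -> is_filter y -> in_dom x m -> in_dom y n ->
  same_set (shift x m) (shift y n) -> exists lam al, x lam /\ src lam = src al /\
  forall mu, src lam = rng mu -> (x (cp lam mu) <-> y (cp al mu)).
Proof.
  intros Fx Fy [lam [xl dl]] [al [ya da]] Hss.
  pose proof (shift_char x m lam Fx xl dl) as Cx.
  pose proof (shift_char y n al Fy ya da) as Cy.
  assert (Hs : src lam = src al).
  { assert (shift y n (idm L (src lam))) as Hy.
    { apply Hss, Cx. rewrite rng_id. split; auto. rewrite comp_id_r; auto. }
    apply Cy in Hy. destruct Hy as [Hy _]. rewrite rng_id in Hy. auto. }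
  exists lam, al. split; auto. split; auto. intros mu Hmu. split.
  - intro H. assert (shift y n mu) as Hy by (apply Hss, Cx; auto). apply Cy in Hy. tauto.
  - intro H. assert (shift x m mu) as Hx by (apply Hss, Cy; split; auto; congruence).
    apply Cx in Hx. tauto.
Qed.

End H.

Theorem lemma5p16 (QP : WQLOG) (L : PGraph QP)
  (hFA : exists lam, @FA QP L lam) :
  (forall g, @bdry_units QP L g -> @unitG QP L g)
  /\ @closed_in_units QP L (@bdry_units QP L)
  /\ @invariant QP L (@bdry_units QP L).
Proof.
  split; [|split].
  - intros g [z [[Pz _] ->]]. exists z; auto.
  - set (U := fun O : Mset L -> Prop => fun z : Mset L => O z /\ pathX z).
    exists (fun h => exists O, open_P O /\ (forall y, O y -> is_max_filter y -> pathX y -> False)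
             /\ basicG (gone QP) (gone QP) (U O) (U O) h).
    split.
    + split.
      * intros [[x q] y] [O [_ [_ B]]]. apply B.
      * intros g [O [HO [HN B]]]. exists (gone QP), (gone QP), (U O), (U O).
        split. apply Pos_one. split. apply Pos_one.
        split. exists O. split; auto. intro; unfold U; tauto.
        split. exists O. split; auto. intro; unfold U; tauto.
        split; auto. intros h Bh. exists O. auto.
    + intros g [x [Px ->]]. split.
      * intro NA.
        assert (~ bdryX x) as NB by (intro Bx; apply NA; exists x; auto).
        assert (exists O, open_P O /\ O x /\ ~ exists y, O y /\ is_max_filter y /\ pathX y)
          as [O [HO [Ox HN]]].
        { apply NNPP. intro C. apply NB. split; auto. intros O HO Ox.
          apply NNPP. intro C2. apply C. exists O. auto. }
        assert (Hq : gone QP = gmul QP (gone QP) (ginv QP (gone QP))) by (rewrite gmul_Vr; auto).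
        assert (Hd : in_dom x (gone QP)).
        { destruct Px as [[[l xl] [Hh _]] _]. exists (idm L (rng L l)). split.
          apply (Hh l); auto. apply prec_id. apply deg_id. }
        exists O. split; auto. split. intros y Oy My Py. apply HN. exists y; auto.
        simpl. split.
        { split; auto. split; auto. exists (gone QP), (gone QP).
          split. apply Pos_one. split. apply Pos_one. split; auto. split; auto. split; auto.
          intro; tauto. }
        split; auto. unfold U. split; [auto|]. split; [auto|]. split; [auto|].
        split; [auto|]. split; [auto|]. intro; tauto.
      * intros [O [HO [HN B]]] [z [Bz E]]. injection E; intros; subst z.
        simpl in B. destruct B as [_ [_ [[Ox _] _]]].
        destruct Bz as [_ Bz]. destruct (Bz O HO Ox) as [y [Oy [My Py]]].
        apply (HN y); auto.
  - intros [[x q] y] Hg [z [Bz E]]. simpl in E. injection E; intros; subst z.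
    simpl. exists x. split; auto.
    destruct Hg as [Px [Py [m [n [_ [_ [_ [Dx [Dy Hss]]]]]]]]].
    destruct (shift_R QP L x y m n (proj1 Px) (proj1 Py) Dx Dy Hss) as [lam [al [xl [Hs HR]]]].
    eapply bdry_transfer; eauto.
Qed.
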